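(* For all integers $d\ge1$ and $p\ge0$, the best constant $C_{p,d}$ in $$\|\partial_{x_i}v\|_{L^2(K^d)}\le C_{p,d}\|v\|_{L^2(K^d)}\qquad\forall v\in\mathbb{P}_p(K^d),\ \forall i\in\{1,\dots,d\}$$ satisfies $C_{p,d}\le\frac{\sqrt5}{4}(2\sqrt2)^d\,C_{p,1}$, where $K^d:=\{x\in\mathbb{R}^d: x_i\ge0\ \forall i,\ \sum_i x_i\le1\}$ is the unit simplex.
   Context: $\mathbb{P}_p(K^d)$ is the space of polynomials of total degree at most $p$ on $K^d$. $C_{p,1}$ denotes the best constant in the univariate inverse inequality $\|v'\|_{L^2(0,1)}\le C_{p,1}\|v\|_{L^2(0,1)}$ for all polynomials $v$ of degree at most $p$ on $(0,1)$. *)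

(* Defs.v *)
From Stdlib Require Import Reals List.
From Coquelicot Require Import Coquelicot.
Import ListNotations.
Open Scope R_scope.

(* Points of R^d are represented as x : nat -> R; only the coordinates
   x 0, ..., x (d-1) matter (coordinate i+1 of the paper is x i). *)

Definition scons (t : R) (y : nat -> R) : nat -> R :=
  fun j => match j with O => t | S j' => y j' end.

Definition upd (x : nat -> R) (i : nat) (t : R) : nat -> R :=
  fun j => if Nat.eqb j i then t else x j.

(* Integral over the scaled simplex s*K^d = {y in R^d : y_k >= 0, sum y_k <= s}
   (s >= 0), written as the iterated integral
     int_0^s ( int over (s - t) K^(d-1) of f(t, .) ) dt. *)
Fixpoint simplex_int (d : nat) (s : R) (f : (nat -> R) -> R) : R :=
  match d with
  | O => f (fun _ => 0)
  | S d' => RInt (fun t => simplex_int d' (s - t) (fun y => f (scons t y))) 0 s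
  end.

Definition L2norm (d : nat) (f : (nat -> R) -> R) : R :=
  sqrt (simplex_int d 1 (fun x => (f x) ^ 2)).

Fixpoint multi_indices (d p : nat) : list (list nat) :=
  match d with
  | O => [ [] ]
  | S d' => flat_map (fun k => map (cons k) (multi_indices d' (p - k)))
                      (seq 0 (S p))
  end.

Fixpoint monom (alpha : list nat) (x : nat -> R) : R :=
  match alpha with
  | [] => 1
  | a :: al => (x 0%nat) ^ a * monom al (fun j => x (S j))
  end.

Definition in_Pp (d p : nat) (v : (nat -> R) -> R) : Prop :=
  exists c : list nat -> R,
    forall x, v x = fold_right Rplus 0 (map (fun a => c a * monom a x) (multi_indices d p)).

Definition partial (i : nat) (v : (nat -> R) -> R) : (nat -> R) -> R :=
  fun x => Derive (fun t => v (upd x i t)) (x i).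

Definition inv_ineq_const (p d : nat) (C : R) : Prop :=
  forall v, in_Pp d p v -> forall i : nat, (i < d)%nat ->
    L2norm d (partial i v) <= C * L2norm d v.

Definition best_const (p d : nat) : Rbar := Glb_Rbar (inv_ineq_const p d).

(* Main.v *)
Require Import Defs.
From Stdlib Require Import Reals Lra Lia Psatz List Arith FunctionalExtensionality Classical.
From Coquelicot Require Import Coquelicot.
Import ListNotations.
Open Scope R_scope.


Fixpoint bigf {A} (op : A -> A -> A) (u : A) (n : nat) (g : nat -> A) : A :=
  match n with O => u | S n' => op (g O) (bigf op u n' (fun k => g (S k))) end.
Notation sumf := (bigf Rplus 0).
Notation prodf := (bigf Rmult 1).
Notation sumn := (bigf Nat.add 0%nat).
Definition updA {A} (g : nat -> A) (i : nat) (a : A) : nat -> A :=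
  fun j => if Nat.eqb j i then a else g j.

Lemma bigf_ext {A} op (u:A) n g h : (forall k, (k < n)%nat -> g k = h k) -> bigf op u n g = bigf op u n h.
Proof.
  revert g h; induction n; intros g h H; simpl; auto.
  rewrite H by lia. f_equal. apply IHn. intros; apply H; lia.
Qed.

Lemma bigf_extract {A} (op : A -> A -> A) u
  (Ha : forall a b c, op a (op b c) = op (op a b) c) (Hc : forall a b, op a b = op b a)
  (Hu : forall a, op u a = a) n g k : (k < n)%nat ->
  bigf op u n g = op (g k) (bigf op u n (updA g k u)).
Proof.
  revert g k; induction n; intros g k Hk; [lia|].
  destruct k as [|k'].
  - simpl. unfold updA at 1. simpl. rewrite Hu. f_equal.
  - simpl. rewrite (IHn (fun k => g (S k)) k') by lia.
    unfold updA at 2. simpl.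
    replace (fun k => updA g (S k') u (S k)) with (updA (fun k => g (S k)) k' u).
    2:{ apply functional_extensionality; intro j; unfold updA; simpl; reflexivity. }
    rewrite !Ha. f_equal. apply Hc.
Qed.

Lemma bigf_last {A} (op : A -> A -> A) u
  (Ha : forall a b c, op a (op b c) = op (op a b) c) (Hc : forall a b, op a b = op b a)
  (Hu : forall a, op u a = a) n g :
  bigf op u (S n) g = op (bigf op u n g) (g n).
Proof.
  revert g; induction n; intros g.
  - simpl. rewrite Hc. reflexivity.
  - change (bigf op u (S (S n)) g) with (op (g O) (bigf op u (S n) (fun k => g (S k)))).
    rewrite IHn. simpl. rewrite Ha. reflexivity.
Qed.

Lemma bigf_op {A} (op : A -> A -> A) u
  (Ha : forall a b c, op a (op b c) = op (op a b) c) (Hc : forall a b, op a b = op b a)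
  (Hu : forall a, op u a = a) n g h :
  bigf op u n (fun k => op (g k) (h k)) = op (bigf op u n g) (bigf op u n h).
Proof.
  revert g h; induction n; intros g h; simpl.
  - rewrite Hu; auto.
  - rewrite IHn. rewrite !Ha. f_equal. rewrite <- !Ha. f_equal. apply Hc.
Qed.

Lemma bigf_unit {A} (op : A -> A -> A) u (Hu : forall a, op u a = a) n :
  bigf op u n (fun _ => u) = u.
Proof. induction n; simpl; auto. rewrite IHn; auto. Qed.

Definition sw (i m k : nat) : nat := if Nat.eqb k i then m else if Nat.eqb k m then i else k.

Lemma sw_invol i m k : sw i m (sw i m k) = k.
Proof.
  unfold sw. destruct (Nat.eqb_spec k i).
  - subst. destruct (Nat.eqb_spec m i); subst; auto. rewrite Nat.eqb_refl. auto.
  - destruct (Nat.eqb_spec k m).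
    + subst. rewrite Nat.eqb_refl. auto.
    + destruct (Nat.eqb_spec k i); [lia|]. destruct (Nat.eqb_spec k m); [lia|]. auto.
Qed.

Lemma bigf_swap {A} (op : A -> A -> A) u
  (Ha : forall a b c, op a (op b c) = op (op a b) c) (Hc : forall a b, op a b = op b a)
  (Hu : forall a, op u a = a) n g i m : (i < n)%nat -> (m < n)%nat ->
  bigf op u n (fun k => g (sw i m k)) = bigf op u n g.
Proof.
  intros Hi Hm. destruct (Nat.eqb_spec i m).
  - subst. apply bigf_ext. intros k _. unfold sw. destruct (Nat.eqb_spec k m); subst; auto.
  - rewrite (bigf_extract op u Ha Hc Hu n g i Hi).
    rewrite (bigf_extract op u Ha Hc Hu n (updA g i u) m Hm).
    rewrite (bigf_extract op u Ha Hc Hu n _ i Hi).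
    rewrite (bigf_extract op u Ha Hc Hu n (updA _ i u) m Hm).
    assert (E1 : Nat.eqb m i = false) by (apply Nat.eqb_neq; lia).
    assert (E2 : sw i m i = m) by (unfold sw; rewrite Nat.eqb_refl; auto).
    assert (E3 : sw i m m = i) by (unfold sw; rewrite E1, Nat.eqb_refl; auto).
    unfold updA at 1 3. rewrite E1. rewrite E2, E3.
    rewrite !Ha. rewrite (Hc (g m) (g i)). f_equal; [unfold updA; rewrite E1; reflexivity|].
    apply bigf_ext. intros k _. unfold updA, sw.
    destruct (Nat.eqb_spec k m); destruct (Nat.eqb_spec k i); auto.
Qed.
Lemma Rp_a : forall a b c : R, a + (b + c) = a + b + c. Proof. intros; ring. Qed.
Lemma Rp_c : forall a b : R, a + b = b + a. Proof. intros; ring. Qed.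
Lemma Rp_u : forall a : R, 0 + a = a. Proof. intros; ring. Qed.
Lemma Rm_a : forall a b c : R, a * (b * c) = a * b * c. Proof. intros; ring. Qed.
Lemma Rm_c : forall a b : R, a * b = b * a. Proof. intros; ring. Qed.
Lemma Rm_u : forall a : R, 1 * a = a. Proof. intros; ring. Qed.
Lemma Np_a : forall a b c : nat, (a + (b + c) = a + b + c)%nat. Proof. intros; lia. Qed.
Lemma Np_c : forall a b : nat, (a + b = b + a)%nat. Proof. intros; lia. Qed.
Lemma Np_u : forall a : nat, (0 + a = a)%nat. Proof. intros; lia. Qed.

Definition sumf_extract := bigf_extract Rplus 0 Rp_a Rp_c Rp_u.
Definition prodf_extract := bigf_extract Rmult 1 Rm_a Rm_c Rm_u.
Definition sumn_extract := bigf_extract Nat.add 0%nat Np_a Np_c Np_u.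
Definition sumf_last := bigf_last Rplus 0 Rp_a Rp_c Rp_u.
Definition prodf_last := bigf_last Rmult 1 Rm_a Rm_c Rm_u.
Definition sumn_last := bigf_last Nat.add 0%nat Np_a Np_c Np_u.
Definition sumf_add := bigf_op Rplus 0 Rp_a Rp_c Rp_u.
Definition prodf_mul := bigf_op Rmult 1 Rm_a Rm_c Rm_u.
Definition sumn_add := bigf_op Nat.add 0%nat Np_a Np_c Np_u.
Definition sumf_swap := bigf_swap Rplus 0 Rp_a Rp_c Rp_u.
Definition prodf_swap := bigf_swap Rmult 1 Rm_a Rm_c Rm_u.
Definition sumn_swap := bigf_swap Nat.add 0%nat Np_a Np_c Np_u.
Lemma sumf_zero n : sumf n (fun _ => 0) = 0. Proof. apply bigf_unit, Rp_u. Qed.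
Lemma prodf_one n : prodf n (fun _ => 1) = 1. Proof. apply bigf_unit, Rm_u. Qed.
Lemma sumn_zero n : sumn n (fun _ => 0%nat) = 0%nat. Proof. apply bigf_unit, Np_u. Qed.

Lemma sumf_scal n c g : sumf n (fun k => c * g k) = c * sumf n g.
Proof. revert g; induction n; intros; simpl; [ring|]. rewrite IHn; ring. Qed.
Lemma sumf_le n g h : (forall k, (k < n)%nat -> g k <= h k) -> sumf n g <= sumf n h.
Proof. revert g h; induction n; intros g h H; simpl; [lra|].
  apply Rplus_le_compat; [apply H; lia| apply IHn; intros; apply H; lia]. Qed.
Lemma sumf_const n c : sumf n (fun _ => c) = INR n * c.
Proof. induction n; simpl sumf; [simpl; ring|]. rewrite IHn, S_INR; ring. Qed.
Lemma INR_sumn n g : INR (sumn n g) = sumf n (fun k => INR (g k)).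
Proof. revert g; induction n; intros; simpl; auto. rewrite plus_INR, IHn. auto. Qed.
Lemma sumf_nonneg n g : (forall k, (k<n)%nat -> 0 <= g k) -> 0 <= sumf n g.
Proof. intros H. pose proof (sumf_le n (fun _ => 0) g H) as H0. rewrite sumf_zero in H0. exact H0. Qed.

Inductive pe := PC (r : R) | PV (k : nat) | PA (a b : pe) | PM (a b : pe).
Fixpoint ev (e : pe) (x : nat -> R) : R :=
  match e with PC r => r | PV k => x k | PA a b => ev a x + ev b x | PM a b => ev a x * ev b x end.
Fixpoint deg (e : pe) : nat :=
  match e with PC _ => 0 | PV _ => 1 | PA a b => Nat.max (deg a) (deg b) | PM a b => deg a + deg b end.
Fixpoint ws (n : nat) (e : pe) : Prop :=
  match e with PC _ => True | PV k => (k < n)%nat | PA a b => ws n a /\ ws n b | PM a b => ws n a /\ ws n b end.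
Fixpoint D (dir : nat -> R) (e : pe) : pe :=
  match e with PC _ => PC 0 | PV k => PC (dir k) | PA a b => PA (D dir a) (D dir b)
  | PM a b => PA (PM (D dir a) b) (PM a (D dir b)) end.
Fixpoint sub (s : nat -> pe) (e : pe) : pe :=
  match e with PC r => PC r | PV k => s k | PA a b => PA (sub s a) (sub s b) | PM a b => PM (sub s a) (sub s b) end.

Lemma ev_sub s e x : ev (sub s e) x = ev e (fun k => ev (s k) x).
Proof. induction e; simpl; auto; rewrite IHe1, IHe2; auto. Qed.

Lemma D_chain dir s e x :
  ev (D dir (sub s e)) x = ev (D (fun k => ev (D dir (s k)) x) e) (fun k => ev (s k) x).
Proof. induction e; simpl; auto; rewrite ?IHe1, ?IHe2, ?ev_sub; auto. Qed.

Lemma D_lin a b d1 d2 e x :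
  ev (D (fun k => a * d1 k + b * d2 k) e) x = a * ev (D d1 e) x + b * ev (D d2 e) x.
Proof. induction e; simpl; try ring; rewrite IHe1, IHe2; ring. Qed.

Lemma D_ext d1 d2 e x : (forall k, d1 k = d2 k) -> ev (D d1 e) x = ev (D d2 e) x.
Proof. intros H. replace d1 with d2; auto. apply functional_extensionality; auto. Qed.

Definition line (a dir : nat -> R) (t : R) : nat -> R := fun k => a k + t * dir k.

Lemma is_derive_line e a dir t :
  is_derive (fun t => ev e (line a dir t)) t (ev (D dir e) (line a dir t)).
Proof.
  induction e; simpl.
  - apply (is_derive_const r t).
  - unfold line. auto_derive; auto. ring.
  - apply (is_derive_plus _ _ _ _ _ IHe1 IHe2).
  - eapply is_derive_ext. 2:{ apply (is_derive_mult _ _ _ _ _ IHe1 IHe2). intros; apply Rmult_comm. }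
    intros; reflexivity.
Qed.

Lemma cont_line e a dir t : continuous (fun t => ev e (line a dir t)) t.
Proof. apply (@ex_derive_continuous R_AbsRing R_NormedModule). eexists. apply is_derive_line. Qed.

Lemma ex_RInt_line e a dir lo hi : ex_RInt (fun t => ev e (line a dir t)) lo hi.
Proof. apply (@ex_RInt_continuous R_CompleteNormedModule). intros; apply cont_line. Qed.

Definition dl (i : nat) : nat -> R := fun k => if Nat.eqb k i then 1 else 0.

Lemma partial_ev e i x : partial i (ev e) x = ev (D (dl i) e) x.
Proof.
  unfold partial.
  assert (Hf : (fun t => ev e (upd x i t)) = (fun t => ev e (line (upd x i 0) (dl i) t))).
  { apply functional_extensionality; intro t. f_equal. apply functional_extensionality; intro k.
    unfold upd, line, dl. destruct (Nat.eqb k i); ring. }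
  rewrite Hf. rewrite (is_derive_unique _ _ _ (is_derive_line e _ _ _)). f_equal.
  apply functional_extensionality; intro k. unfold upd, line, dl.
  destruct (Nat.eqb_spec k i); subst; ring.
Qed.
Ltac fixinv := repeat match goal with |- context [RinvImpl.Rinv ?x] => change (RinvImpl.Rinv x) with (/ x) end.
Ltac fixINR := repeat match goal with |- context [match ?n with 0%nat => 1 | S _ => INR ?n + 1 end] =>
   change (match n with 0%nat => 1 | S _ => INR n + 1 end) with (INR (S n)) end.
Ltac rsimpl := unfold scal, minus, plus, opp, mult, zero; simpl; unfold mult, plus, opp, zero; simpl; fixINR; try match goal with |- ?a = ?b => change (@eq R a b) end.
Definition fR (n : nat) : R := INR (fact n).
Lemma fR_nz n : fR n <> 0. Proof. apply INR_fact_neq_0. Qed.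
Lemma fR_S n : fR (S n) = INR (S n) * fR n.
Proof. unfold fR. change (fact (S n)) with (S n * fact n)%nat. rewrite mult_INR. auto. Qed.

Lemma is_RInt_val (f : R -> R) a b v w : is_RInt f a b v -> v = w -> is_RInt f a b w.
Proof. intros H ->; auto. Qed.

Lemma cont_poly2 a b s t : continuous (fun t => t ^ a * (s - t) ^ b) t.
Proof. apply (@ex_derive_continuous R_AbsRing R_NormedModule). auto_derive. auto. Qed.

Lemma aux_beta1 s x a b : (/ INR (S b) *
 (INR (S a) * (x ^ a * ((s - x) * (s - x) ^ b)) +
  - (INR (S a) * (x ^ a * ((s - x) * (s - x) ^ b)) -
   INR (S b) * (x * x ^ a * (s - x) ^ b))) = x * x ^ a * (s - x) ^ b).
Proof. field. pose proof (pos_INR b). rewrite S_INR; lra. Qed.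

Lemma beta a : forall b s, is_RInt (fun t => t ^ a * (s - t) ^ b) 0 s
  (s ^ (a + b + 1) * fR a * fR b / fR (a + b + 1)).
Proof.
  induction a; intros b s.
  - pose (F := fun t => - (s - t) ^ (S b) / INR (S b)).
    assert (H := is_RInt_derive F (fun t => t ^ 0 * (s - t) ^ b) 0 s).
    eapply is_RInt_val. apply H.
    + intros y _. unfold F. auto_derive; [auto|].
      change (match b with 0%nat => 1 | S _ => INR b + 1 end) with (INR (S b)).
      match goal with |- ?a = ?b => change (@eq R a b) end. replace (s + - y) with (s - y) by ring. field. pose proof (pos_INR b). rewrite S_INR; lra.
    + intros x _. apply cont_poly2.
    + unfold F, minus, plus, opp; simpl.
      change (match b with 0%nat => 1 | S _ => INR b + 1 end) with (INR (S b)).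
      replace (b + 1)%nat with (S b) by lia. rewrite fR_S.
      replace (fR 0) with 1 by reflexivity.
      replace (s - s) with 0 by ring. replace (s - 0) with s by ring. simpl pow.
      pose proof (fR_nz b). pose proof (pos_INR b). rewrite S_INR. field. split; lra.
  - pose (F := fun t => t ^ (S a) * (s - t) ^ (S b)).
    pose (dF := fun t => INR (S a) * (t ^ a * (s - t) ^ (S b)) - INR (S b) * (t ^ (S a) * (s - t) ^ b)).
    assert (H := is_RInt_derive F dF 0 s).
    assert (H1 : is_RInt dF 0 s 0).
    { eapply is_RInt_val. apply H.
      + intros x _. unfold F, dF. auto_derive; auto.
        change (match b with 0%nat => 1 | S _ => INR b + 1 end) with (INR (S b)).
        change (match a with 0%nat => 1 | S _ => INR a + 1 end) with (INR (S a)).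
        replace (s + - x) with (s - x) by ring. simpl pow. ring.
      + intros x _. unfold dF. apply (@ex_derive_continuous R_AbsRing R_NormedModule). auto_derive. auto.
      + unfold F, minus, plus, opp; simpl. ring. }
    assert (H2 := IHa (S b) s).
    assert (H3 := is_RInt_minus _ _ _ _ _ _ (is_RInt_scal _ _ _ (INR (S a)) _ H2) H1).
    assert (H4 := is_RInt_scal _ _ _ (/ INR (S b)) _ H3).
    eapply is_RInt_val.
    + eapply is_RInt_ext. 2: exact H4.
      intros x _. unfold dF. rsimpl. apply aux_beta1.
    + rsimpl.
      replace (a + S b + 1)%nat with (S a + b + 1)%nat by lia.
      rewrite (fR_S b), (fR_S a). replace (S a + b + 1)%nat with (S (a + b + 1)) by lia.
      simpl pow. field. split; [apply fR_nz|]. pose proof (pos_INR b). rewrite S_INR; lra.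
Qed.
Definition item := (R * nat * (nat -> nat))%type.
Definition bmon n s b0 (e : nat -> nat) (x : nat -> R) : R :=
  (s - sumf n x) ^ b0 * prodf n (fun k => x k ^ e k).
Definition icombo n s (it : item) x : R := let '(c, b0, e) := it in c * bmon n s b0 e x.
Definition combo n s (L : list item) x : R := fold_right Rplus 0 (map (fun it => icombo n s it x) L).
Definition clo n s b0 (e : nat -> nat) : R :=
  s ^ (b0 + sumn n e + n) * fR b0 * prodf n (fun k => fR (e k)) / fR (b0 + sumn n e + n).
Definition iclo n s (it : item) : R := let '(c, b0, e) := it in c * clo n s b0 e.
Definition closedL n s (L : list item) : R := fold_right Rplus 0 (map (iclo n s) L).
Definition shiftI (t : R) (it : item) : item :=
  let '(c, b0, e) := it in (c * t ^ e 0%nat, b0, fun k => e (S k)).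

Lemma combo_scons n s L t y : combo (S n) s L (scons t y) = combo n (s - t) (map (shiftI t) L) y.
Proof.
  unfold combo; induction L as [|[[c b0] e] L IH]; simpl; auto.
  rewrite IH. f_equal. unfold bmon. simpl.
  change (bigf Rplus 0 n (fun k => y k)) with (sumf n y).
  replace (s - (t + sumf n y)) with (s - t - sumf n y) by ring.
  ring.
Qed.

Lemma step_is n s L : is_RInt (fun t => closedL n (s - t) (map (shiftI t) L)) 0 s (closedL (S n) s L).
Proof.
  unfold closedL; induction L as [|[[c b0] e] L IH]; simpl.
  - eapply is_RInt_val. apply (is_RInt_const 0 s 0). rsimpl. ring.
  - apply (@is_RInt_plus R_NormedModule); [|exact IH].
    set (M := (b0 + sumn n (fun k => e (S k)) + n)%nat).
    set (K := fR b0 * prodf n (fun k => fR (e (S k))) / fR M).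
    assert (H := is_RInt_scal _ _ _ (c * K) _ (beta (e 0%nat) M s)).
    eapply is_RInt_val.
    + eapply is_RInt_ext. 2: exact H. intros t _. rsimpl. unfold clo. fold M. unfold K. field. apply fR_nz.
    + rsimpl. unfold clo. simpl sumn. simpl prodf.
      replace (b0 + (e 0%nat + sumn n (fun k => e (S k))) + S n)%nat with (e 0%nat + M + 1)%nat by (unfold M; lia).
      unfold K. field. split; apply fR_nz.
Qed.

Lemma int_combo n : forall s L, simplex_int n s (combo n s L) = closedL n s L.
Proof.
  induction n; intros s L.
  - simpl. unfold combo, closedL. induction L as [|[[c b0] e] L IH]; simpl; auto. rewrite IH. f_equal. unfold bmon, clo. simpl.
    replace (b0 + 0 + 0)%nat with b0 by lia. replace (s - 0) with s by ring. field. apply fR_nz.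
  - simpl.
    replace (fun t => simplex_int n (s - t) (fun y => combo (S n) s L (scons t y)))
      with (fun t => closedL n (s - t) (map (shiftI t) L)).
    + apply is_RInt_unique, step_is.
    + apply functional_extensionality; intro t.
      rewrite <- IHn. f_equal. apply functional_extensionality; intro y. rewrite combo_scons. auto.
Qed.
Definition in_simplex n s (x : nat -> R) : Prop := (forall k, (k < n)%nat -> 0 <= x k) /\ sumf n x <= s.

Lemma in_simplex_scons n s t y : 0 <= t -> in_simplex n (s - t) y -> in_simplex (S n) s (scons t y).
Proof.
  intros Ht [H1 H2]. split.
  - intros [|k] Hk; simpl; auto. apply H1; lia.
  - simpl. change (bigf Rplus 0 n (fun k => y k)) with (sumf n y). lra.
Qed.

Lemma pos_closed n : forall s L, 0 <= s -> (forall x, in_simplex n s x -> 0 <= combo n s L x) ->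
  0 <= closedL n s L.
Proof.
  induction n; intros s L Hs H.
  - rewrite <- int_combo. simpl. apply H. split; [intros; lia| simpl; lra].
  - rewrite <- (is_RInt_unique _ _ _ _ (step_is n s L)).
    apply RInt_ge_0; auto.
    + eexists; apply step_is.
    + intros t Ht. apply IHn; [lra|]. intros y Hy. rewrite <- combo_scons. apply H.
      apply in_simplex_scons; auto; lra.
Qed.

Lemma combo_app n s L1 L2 x : combo n s (L1 ++ L2) x = combo n s L1 x + combo n s L2 x.
Proof. unfold combo. induction L1; simpl; [ring|]. rewrite IHL1. ring. Qed.
Lemma closedL_app n s L1 L2 : closedL n s (L1 ++ L2) = closedL n s L1 + closedL n s L2.
Proof. unfold closedL. induction L1; simpl; [ring|]. rewrite IHL1. ring. Qed.

Definition scaleL (a : R) (L : list item) : list item := map (fun it => let '(c, b0, e) := it in (a * c, b0, e)) L.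
Lemma combo_scale n s a L x : combo n s (scaleL a L) x = a * combo n s L x.
Proof. unfold combo, scaleL. induction L as [|[[c b0] e] L IH]; simpl; [ring|]. rewrite IH. ring. Qed.
Lemma closedL_scale n s a L : closedL n s (scaleL a L) = a * closedL n s L.
Proof. unfold closedL, scaleL. induction L as [|[[c b0] e] L IH]; simpl; [ring|]. rewrite IH. ring. Qed.

Definition mulI (i1 i2 : item) : item :=
  let '(c1, b1, e1) := i1 in let '(c2, b2, e2) := i2 in (c1 * c2, (b1 + b2)%nat, fun k => (e1 k + e2 k)%nat).
Definition mulL (L1 L2 : list item) : list item := flat_map (fun i1 => map (mulI i1) L2) L1.

Lemma bmon_mul n s b1 e1 b2 e2 x :
  bmon n s (b1 + b2) (fun k => (e1 k + e2 k)%nat) x = bmon n s b1 e1 x * bmon n s b2 e2 x.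
Proof.
  unfold bmon. rewrite pow_add.
  replace (fun k => x k ^ (e1 k + e2 k)) with (fun k => x k ^ e1 k * x k ^ e2 k)
    by (apply functional_extensionality; intro k; rewrite pow_add; auto).
  rewrite prodf_mul. ring.
Qed.

Lemma combo_mul n s L1 L2 x : combo n s (mulL L1 L2) x = combo n s L1 x * combo n s L2 x.
Proof.
  induction L1 as [|i1 L1 IH]; [unfold combo; simpl; ring|].
  unfold mulL. simpl flat_map. rewrite combo_app. fold (mulL L1 L2). rewrite IH.
  assert (E : combo n s (map (mulI i1) L2) x = icombo n s i1 x * combo n s L2 x).
  { clear IH. unfold combo. induction L2 as [|i2 L2 IH2]; simpl; [ring|]. rewrite IH2.
    destruct i1 as [[c1 b1] e1]; destruct i2 as [[c2 b2] e2]; simpl. rewrite bmon_mul. ring. }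
  rewrite E. unfold combo. simpl. ring.
Qed.

Definition degOK n p (L : list item) : Prop :=
  List.Forall (fun it => let '(c, b0, e) := it in (b0 + sumn n e <= p)%nat) L.

Lemma degOK_mono n p q L : (p <= q)%nat -> degOK n p L -> degOK n q L.
Proof. intros Hpq H. unfold degOK in *. eapply Forall_impl; [|exact H]. intros [[c b0] e]; lia. Qed.

Lemma degOK_app n p L1 L2 : degOK n p L1 -> degOK n p L2 -> degOK n p (L1 ++ L2).
Proof. intros; apply Forall_app; auto. Qed.

Lemma degOK_mul n p q L1 L2 : degOK n p L1 -> degOK n q L2 -> degOK n (p + q) (mulL L1 L2).
Proof.
  intros H1 H2. unfold degOK in *. rewrite Forall_forall in *. intros it Hit.
  unfold mulL in Hit. apply in_flat_map in Hit as [i1 [Hi1 Hit]]. apply in_map_iff in Hit as [i2 [<- Hi2]].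
  specialize (H1 _ Hi1). specialize (H2 _ Hi2).
  destruct i1 as [[c1 b1] e1]; destruct i2 as [[c2 b2] e2]; simpl. rewrite sumn_add. lia.
Qed.

Definition delta (k : nat) : nat -> nat := fun j => if Nat.eqb j k then 1%nat else 0%nat.

Lemma pe_BC n e : ws n e -> exists L, degOK n (deg e) L /\ forall x, ev e x = combo n 1 L x.
Proof.
  induction e; simpl; intros Hws.
  - exists [(r, 0%nat, fun _ => 0%nat)]. split.
    + constructor; [|constructor]. rewrite sumn_zero. simpl; lia.
    + intros x. unfold combo; simpl; unfold bmon; simpl.
      rewrite prodf_one. ring.
  - exists [(1, 0%nat, delta k)]. split.
    + constructor; [|constructor]. rewrite (sumn_extract n _ k Hws). unfold delta at 1. rewrite Nat.eqb_refl.
      replace (updA (delta k) k 0%nat) with (fun _ : nat => 0%nat). rewrite sumn_zero; lia.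
      apply functional_extensionality; intro j. unfold updA, delta. destruct (Nat.eqb j k); auto.
    + intros x. unfold combo; simpl; unfold bmon; simpl. rewrite (prodf_extract n _ k Hws). unfold delta at 1.
      rewrite Nat.eqb_refl.
      replace (updA (fun k0 => x k0 ^ delta k k0) k 1) with (fun _ : nat => 1). rewrite prodf_one. ring.
      apply functional_extensionality; intro j. unfold updA, delta. destruct (Nat.eqb j k); auto.
  - destruct Hws as [H1 H2]. destruct (IHe1 H1) as [L1 [D1 E1]]. destruct (IHe2 H2) as [L2 [D2 E2]].
    exists (L1 ++ L2). split.
    + apply degOK_app; [apply (degOK_mono n (deg e1)) | apply (degOK_mono n (deg e2))]; auto; lia.
    + intros x. rewrite combo_app, E1, E2; auto.
  - destruct Hws as [H1 H2]. destruct (IHe1 H1) as [L1 [D1 E1]]. destruct (IHe2 H2) as [L2 [D2 E2]].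
    exists (mulL L1 L2). split.
    + apply degOK_mul; auto.
    + intros x. rewrite combo_mul, E1, E2; auto.
Qed.

Definition BC n (f : (nat -> R) -> R) : Prop := exists L, forall x, f x = combo n 1 L x.

Lemma BC_ev n e : ws n e -> BC n (ev e).
Proof. intros H. destruct (pe_BC n e H) as [L [_ E]]. exists L; auto. Qed.

Lemma BC_ext n f g : (forall x, f x = g x) -> BC n g -> BC n f.
Proof. intros H [L E]. exists L. intros; rewrite H; auto. Qed.

Lemma int_ext n s f g : (forall x, f x = g x) -> simplex_int n s f = simplex_int n s g.
Proof. intros H. replace f with g; auto. apply functional_extensionality; auto. Qed.

Lemma int_BC n f L : (forall x, f x = combo n 1 L x) -> simplex_int n 1 f = closedL n 1 L.
Proof. intros H. rewrite (int_ext n 1 f (combo n 1 L) H). apply int_combo. Qed.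

Lemma mono_BC n f g : BC n f -> BC n g -> (forall x, in_simplex n 1 x -> f x <= g x) ->
  simplex_int n 1 f <= simplex_int n 1 g.
Proof.
  intros [L1 E1] [L2 E2] H. rewrite (int_BC n f L1 E1), (int_BC n g L2 E2).
  assert (P := pos_closed n 1 (L2 ++ scaleL (-1) L1) ltac:(lra)).
  rewrite closedL_app, closedL_scale in P.
  assert (0 <= closedL n 1 L2 + -1 * closedL n 1 L1); [|lra].
  apply P. intros x Hx. rewrite combo_app, combo_scale, <- E1, <- E2. specialize (H x Hx). lra.
Qed.

Lemma int_add n f g : BC n f -> BC n g ->
  simplex_int n 1 (fun x => f x + g x) = simplex_int n 1 f + simplex_int n 1 g.
Proof.
  intros [L1 E1] [L2 E2]. rewrite (int_BC n f L1 E1), (int_BC n g L2 E2).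
  rewrite (int_BC _ _ (L1 ++ L2)). apply closedL_app.
  intros x. rewrite combo_app, E1, E2; auto.
Qed.

Lemma int_scal n c f : BC n f -> simplex_int n 1 (fun x => c * f x) = c * simplex_int n 1 f.
Proof.
  intros [L E]. rewrite (int_BC n f L E). rewrite (int_BC _ _ (scaleL c L)). apply closedL_scale.
  intros x. rewrite combo_scale, E; auto.
Qed.

Lemma updA_same {A} (g : nat -> A) j a b : updA (updA g j a) j b = updA g j b.
Proof. apply functional_extensionality; intro k; unfold updA. destruct (Nat.eqb k j); auto. Qed.
Lemma updA_at {A} (g : nat -> A) j a : updA g j a j = a.
Proof. unfold updA. rewrite Nat.eqb_refl. auto. Qed.

Lemma sumf_upd n g j a : (j < n)%nat -> sumf n (updA g j a) = a + sumf n (updA g j 0).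
Proof. intros H. rewrite (sumf_extract n _ j H), updA_at, updA_same. auto. Qed.
Lemma prodf_upd n g j a : (j < n)%nat -> prodf n (updA g j a) = a * prodf n (updA g j 1).
Proof. intros H. rewrite (prodf_extract n _ j H), updA_at, updA_same. auto. Qed.
Lemma sumn_upd n g j a : (j < n)%nat -> sumn n (updA g j a) = (a + sumn n (updA g j 0))%nat.
Proof. intros H. rewrite (sumn_extract n _ j H), updA_at, updA_same. auto. Qed.

Lemma sumf_upd_out n g j a : (n <= j)%nat -> sumf n (updA g j a) = sumf n g.
Proof. intros H. apply bigf_ext. intros k Hk. unfold updA. destruct (Nat.eqb_spec k j); auto; lia. Qed.
Lemma prodf_upd_out n g j a : (n <= j)%nat -> prodf n (updA g j a) = prodf n g.
Proof. intros H. apply bigf_ext. intros k Hk. unfold updA. destruct (Nat.eqb_spec k j); auto; lia. Qed.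

Lemma peel m : forall s f, simplex_int (S m) s f =
  simplex_int m s (fun y => RInt (fun t => f (upd y m t)) 0 (s - sumf m y)).
Proof.
  induction m; intros s f.
  - simpl. replace (s - 0) with s by ring. f_equal. apply functional_extensionality; intro t.
    f_equal. apply functional_extensionality; intros [|j]; reflexivity.
  - change (simplex_int (S (S m)) s f) with
      (RInt (fun t => simplex_int (S m) (s - t) (fun y => f (scons t y))) 0 s).
    change (simplex_int (S m) s (fun y => RInt (fun t => f (upd y (S m) t)) 0 (s - sumf (S m) y))) with
      (RInt (fun t => simplex_int m (s - t) (fun y => RInt (fun u => f (upd (scons t y) (S m) u)) 0
         (s - sumf (S m) (scons t y)))) 0 s).
    f_equal. apply functional_extensionality; intro t. rewrite IHm. f_equal.
    apply functional_extensionality; intro y. simpl.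
    change (bigf Rplus 0 m (fun k => y k)) with (sumf m y).
    replace (s - (t + sumf m y)) with (s - t - sumf m y) by ring. f_equal.
    apply functional_extensionality; intro u. f_equal. apply functional_extensionality; intros [|j]; reflexivity.
Qed.

Definition peelI m (it : item) : item :=
  let '(c, b0, e) := it in (c * fR (e m) * fR b0 / fR (e m + b0 + 1), (e m + b0 + 1)%nat, e).

Lemma bmon_line m b0 e y t :
  bmon (S m) 1 b0 e (upd y m t) = prodf m (fun k => y k ^ e k) * (t ^ e m * ((1 - sumf m y) - t) ^ b0).
Proof.
  unfold bmon. rewrite sumf_last, prodf_last.
  change (upd y m t) with (updA y m t).
  rewrite sumf_upd_out by lia. replace (updA y m t m) with t by (unfold updA; rewrite Nat.eqb_refl; auto).
  replace (fun k => updA y m t k ^ e k) with (updA (fun k => y k ^ e k) m (t ^ e m)).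
  2:{ apply functional_extensionality; intro k; unfold updA; destruct (Nat.eqb_spec k m); subst; auto. }
  rewrite prodf_upd_out by lia.
  replace (1 - (sumf m y + t)) with (1 - sumf m y - t) by ring. ring.
Qed.

Lemma peel_combo m L y :
  RInt (fun t => combo (S m) 1 L (upd y m t)) 0 (1 - sumf m y) = combo m 1 (map (peelI m) L) y.
Proof.
  apply is_RInt_unique. unfold combo. induction L as [|[[c b0] e] L IH]; simpl.
  - eapply is_RInt_val. apply (is_RInt_const 0 _ 0). rsimpl. ring.
  - apply (@is_RInt_plus R_NormedModule); [|exact IH].
    set (P := prodf m (fun k => y k ^ e k)).
    assert (H := is_RInt_scal _ _ _ (c * P) _ (beta (e m) b0 (1 - sumf m y))).
    eapply is_RInt_val.
    + eapply is_RInt_ext. 2: exact H. intros t _. rsimpl. rewrite bmon_line. fold P. ring.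
    + rsimpl. unfold bmon. fold P. field. apply fR_nz.
Qed.

Fixpoint psum (n : nat) : pe := match n with O => PC 0 | S n' => PA (psum n') (PV n') end.
Lemma ev_psum n x : ev (psum n) x = sumf n x.
Proof. induction n; [reflexivity|]. change (ev (psum (S n)) x) with (ev (psum n) x + x n). rewrite IHn, sumf_last. auto. Qed.
Lemma ws_psum n : ws n (psum n).
Proof.
  assert (forall m, (m <= n)%nat -> ws n (psum m)). { induction m; simpl; auto. intros; split; [apply IHm|]; lia. }
  apply H; lia.
Qed.
Lemma deg_psum n : (deg (psum n) <= 1)%nat.
Proof. induction n; simpl; lia. Qed.
Lemma D_psum dir n x : ev (D dir (psum n)) x = sumf n dir.
Proof. induction n; [reflexivity|]. change (ev (D dir (psum (S n))) x) with (ev (D dir (psum n)) x + dir n). rewrite IHn, sumf_last. auto. Qed.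

Definition Lam n : pe := PA (PC 1) (PM (PC (-1)) (psum n)).
Lemma ev_Lam n x : ev (Lam n) x = 1 - sumf n x.
Proof. simpl. rewrite ev_psum. ring. Qed.

Definition swS i m : nat -> pe := fun k => PV (sw i m k).
Definition vS n j : nat -> pe := fun k => if Nat.eqb k j then Lam n else PV k.

Lemma ws_sub n n' s e : ws n e -> (forall k, (k < n)%nat -> ws n' (s k)) -> ws n' (sub s e).
Proof. intros Hw Hs. induction e; simpl in *; auto; destruct Hw; split; auto. Qed.
Lemma deg_sub s e : (forall k, (deg (s k) <= 1)%nat) -> (deg (sub s e) <= deg e)%nat.
Proof. intros H. induction e; simpl; [lia|apply H|lia|lia]. Qed.

Lemma sw_lt i m n k : (i < n)%nat -> (m < n)%nat -> (k < n)%nat -> (sw i m k < n)%nat.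
Proof. intros. unfold sw. destruct (Nat.eqb k i); auto. destruct (Nat.eqb k m); auto. Qed.

Lemma ws_swS n i m k : (i < n)%nat -> (m < n)%nat -> (k < n)%nat -> ws n (swS i m k).
Proof. intros. simpl. apply sw_lt; auto. Qed.
Lemma ws_vS n j k : (k < n)%nat -> ws n (vS n j k).
Proof. intros. unfold vS. destruct (Nat.eqb k j); simpl; [|exact H]. split; [exact I|]. split; [exact I|]. apply ws_psum. Qed.
Lemma deg_swS i m k : (deg (swS i m k) <= 1)%nat. Proof. simpl; lia. Qed.
Lemma deg_vS n j k : (deg (vS n j k) <= 1)%nat.
Proof. unfold vS. destruct (Nat.eqb k j); simpl; try lia. pose proof (deg_psum n). lia. Qed.

Definition swI i m (it : item) : item := let '(c, b0, e) := it in (c, b0, fun k => e (sw i m k)).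
Definition vI j (it : item) : item := let '(c, b0, e) := it in (c, e j, updA e j b0).

Lemma combo_sw n i m L x : (i < n)%nat -> (m < n)%nat ->
  combo n 1 L (fun k => x (sw i m k)) = combo n 1 (map (swI i m) L) x.
Proof.
  intros Hi Hm. unfold combo. induction L as [|[[c b0] e] L IH]; simpl; auto. rewrite IH. f_equal. f_equal.
  unfold bmon. rewrite (sumf_swap n x i m Hi Hm). f_equal.
  rewrite <- (prodf_swap n (fun k => x k ^ e (sw i m k)) i m Hi Hm). f_equal.
  apply functional_extensionality; intro k. rewrite sw_invol. auto.
Qed.

Lemma closed_sw n i m L : (i < n)%nat -> (m < n)%nat -> closedL n 1 (map (swI i m) L) = closedL n 1 L.
Proof.
  intros Hi Hm. unfold closedL. induction L as [|[[c b0] e] L IH]; simpl; auto. rewrite IH. f_equal. f_equal.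
  unfold clo. rewrite (sumn_swap n e i m Hi Hm). f_equal. f_equal.
  apply (prodf_swap n (fun k => fR (e k)) i m Hi Hm).
Qed.

Lemma combo_v n j L x : (j < n)%nat ->
  combo n 1 L (updA x j (1 - sumf n x)) = combo n 1 (map (vI j) L) x.
Proof.
  intros Hj. unfold combo. induction L as [|[[c b0] e] L IH]; simpl; auto. rewrite IH. f_equal. f_equal.
  unfold bmon. rewrite (sumf_upd n x j _ Hj).
  rewrite (sumf_extract n x j Hj).
  replace (fun k => updA x j (1 - (x j + sumf n (updA x j 0))) k ^ e k)
    with (updA (fun k => x k ^ e k) j ((1 - (x j + sumf n (updA x j 0))) ^ e j)).
  2:{ apply functional_extensionality; intro k; unfold updA; destruct (Nat.eqb_spec k j); subst; auto. }
  replace (fun k => x k ^ updA e j b0 k) with (updA (fun k => x k ^ e k) j (x j ^ b0)).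
  2:{ apply functional_extensionality; intro k; unfold updA; destruct (Nat.eqb_spec k j); subst; auto. }
  rewrite (prodf_upd n _ j (x j ^ b0) Hj).
  rewrite (prodf_upd n _ j ((1 - (x j + sumf n (updA x j 0))) ^ e j) Hj).
  replace (1 - (1 - (x j + sumf n (updA x j 0)) + sumf n (updA x j 0))) with (x j) by ring.
  ring.
Qed.

Lemma closed_v n j L : (j < n)%nat -> closedL n 1 (map (vI j) L) = closedL n 1 L.
Proof.
  intros Hj. unfold closedL. induction L as [|[[c b0] e] L IH]; simpl; auto. rewrite IH. f_equal. f_equal.
  unfold clo. rewrite (sumn_upd n e j b0 Hj).
  rewrite (sumn_extract n e j Hj).
  replace (e j + (b0 + sumn n (updA e j 0)) + n)%nat with (b0 + (e j + sumn n (updA e j 0)) + n)%nat by lia.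
  replace (fun k => fR (updA e j b0 k)) with (updA (fun k => fR (e k)) j (fR b0)).
  2:{ apply functional_extensionality; intro k; unfold updA; destruct (Nat.eqb_spec k j); subst; auto. }
  rewrite (prodf_upd n _ j _ Hj). rewrite (prodf_extract n (fun k => fR (e k)) j Hj). field. apply fR_nz.
Qed.

Lemma inv_sw n i m e : (i < n)%nat -> (m < n)%nat -> ws n e ->
  simplex_int n 1 (ev (sub (swS i m) e)) = simplex_int n 1 (ev e).
Proof.
  intros Hi Hm Hws. destruct (pe_BC n e Hws) as [L [_ E]].
  rewrite (int_BC n (ev e) L E). rewrite <- (closed_sw n i m L Hi Hm).
  apply int_BC. intros x. rewrite ev_sub, E. simpl. apply combo_sw; auto.
Qed.

Lemma inv_v n j e : (j < n)%nat -> ws n e ->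
  simplex_int n 1 (ev (sub (vS n j) e)) = simplex_int n 1 (ev e).
Proof.
  intros Hj Hws. destruct (pe_BC n e Hws) as [L [_ E]].
  rewrite (int_BC n (ev e) L E). rewrite <- (closed_v n j L Hj).
  apply int_BC. intros x. rewrite ev_sub, E. rewrite <- combo_v by auto. f_equal.
  apply functional_extensionality; intro k. unfold vS, updA. destruct (Nat.eqb k j); auto. apply ev_Lam.
Qed.
Definition poly1 p (g : R -> R) : Prop := exists c : nat -> R, forall u, g u = sumf (S p) (fun k => c k * u ^ k).

Lemma p1_ext p f g : (forall u, f u = g u) -> poly1 p g -> poly1 p f.
Proof. intros H [c Hc]. exists c. intros u. rewrite H; auto. Qed.

Lemma p1_const r : poly1 0 (fun _ => r).
Proof. exists (fun _ => r). intros u. simpl. ring. Qed.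

Lemma p1_mono p g : poly1 p g -> poly1 (S p) g.
Proof.
  intros [c Hc]. exists (fun k => if Nat.leb k p then c k else 0). intros u.
  rewrite sumf_last, Hc. replace (Nat.leb (S p) p) with false by (symmetry; apply Nat.leb_gt; lia).
  replace (sumf (S p) (fun k => (if Nat.leb k p then c k else 0) * u ^ k)) with (sumf (S p) (fun k => c k * u ^ k)).
  ring. apply bigf_ext. intros k Hk. replace (Nat.leb k p) with true; auto. symmetry; apply Nat.leb_le; lia.
Qed.

Lemma p1_mono_le p q g : (p <= q)%nat -> poly1 p g -> poly1 q g.
Proof. intros H. induction H; auto. intros; apply p1_mono; auto. Qed.

Lemma p1_add p f g : poly1 p f -> poly1 p g -> poly1 p (fun u => f u + g u).
Proof.
  intros [c1 H1] [c2 H2]. exists (fun k => c1 k + c2 k). intros u. rewrite H1, H2, <- sumf_add.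
  apply bigf_ext. intros; ring.
Qed.

Lemma p1_scal p a g : poly1 p g -> poly1 p (fun u => a * g u).
Proof.
  intros [c H]. exists (fun k => a * c k). intros u. rewrite H, <- sumf_scal. apply bigf_ext. intros; ring.
Qed.

Lemma p1_mulu p g : poly1 p g -> poly1 (S p) (fun u => u * g u).
Proof.
  intros [c H]. exists (fun k => match k with O => 0 | S k' => c k' end). intros u.
  rewrite H. change (sumf (S (S p)) (fun k => match k with O => 0 | S k' => c k' end * u ^ k))
    with (0 * u ^ 0 + sumf (S p) (fun k => c k * u ^ (S k))).
  rewrite <- sumf_scal. replace (fun k => c k * u ^ S k) with (fun k => u * (c k * u ^ k)).
  ring. apply functional_extensionality; intro k; simpl; ring.
Qed.

Lemma p1_term b e0 : poly1 (b + e0) (fun u => (1 - u) ^ b * u ^ e0).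
Proof.
  induction b; simpl.
  - eapply p1_ext. 2:{ instantiate (1 := fun u => u ^ e0).
      induction e0; simpl. apply p1_const. apply p1_mulu; auto. }
    intros; cbv beta; ring.
  - eapply p1_ext. 2:{ apply p1_add. apply p1_mono, IHb. apply (p1_scal _ (-1)), p1_mulu, IHb. }
    intros u. simpl. ring.
Qed.

Lemma p1_combo1 p L : degOK 1 p L -> poly1 p (fun u => combo 1 1 L (fun _ => u)).
Proof.
  unfold degOK, combo. induction L as [|[[c b0] e] L IH]; intros H; simpl.
  - eapply p1_mono_le; [|apply (p1_const 0)]. lia.
  - inversion H; subst. apply p1_add; [|apply IH; auto].
    apply p1_scal. unfold bmon. simpl.
    eapply p1_ext. 2:{ apply (p1_mono_le (b0 + e 0%nat)). simpl in H2. lia. apply p1_term. }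
    intros u. simpl. replace (1 - (u + 0)) with (1 - u) by ring. ring.
Qed.

Lemma fold_seq (f : nat -> R) n : forall s, fold_right Rplus 0 (map f (seq s n)) = sumf n (fun k => f (s + k)%nat).
Proof.
  induction n; intros s; simpl; auto. rewrite IHn. rewrite Nat.add_0_r. f_equal.
  apply bigf_ext. intros k _. f_equal. lia.
Qed.

Lemma mi1 p : multi_indices 1 p = map (fun k => [k]) (seq 0 (S p)).
Proof. unfold multi_indices. generalize (seq 0 (S p)). intros l. induction l as [|a l IH]. reflexivity. simpl. simpl in IH. rewrite IH. auto. Qed.

Lemma inPp1 p g : poly1 p g -> in_Pp 1 p (fun z => g (z 0%nat)).
Proof.
  intros [c H]. exists (fun a => match a with [k] => c k | _ => 0 end). intros x.
  rewrite mi1, map_map, fold_seq, H. apply bigf_ext. intros k _. simpl. ring.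
Qed.

Lemma pe_inPp1 p e : ws 1 e -> (deg e <= p)%nat -> in_Pp 1 p (ev e).
Proof.
  intros Hw Hd. destruct (pe_BC 1 e Hw) as [L [DL E]].
  assert (P := p1_combo1 p L (degOK_mono 1 _ _ L Hd DL)).
  destruct (inPp1 p _ P) as [c Hc]. exists c. intros x. rewrite <- Hc, E.
  unfold combo. f_equal.
Qed.

Fixpoint ppow (P : pe) (k : nat) : pe := match k with O => PC 1 | S k' => PM P (ppow P k') end.
Fixpoint pmonom (off : nat) (al : list nat) : pe :=
  match al with [] => PC 1 | a :: al' => PM (ppow (PV off) a) (pmonom (S off) al') end.

Lemma ev_ppow P k x : ev (ppow P k) x = ev P x ^ k.
Proof. induction k; simpl; auto. rewrite IHk; auto. Qed.
Lemma ev_pmonom al : forall off x, ev (pmonom off al) x = monom al (fun j => x (off + j)%nat).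
Proof.
  induction al; intros off x; simpl; auto. rewrite ev_ppow, IHal. simpl. rewrite Nat.add_0_r. f_equal.
  f_equal. apply functional_extensionality; intro j. f_equal. lia.
Qed.
Lemma deg_ppow k : (deg (ppow (PV 0) k) <= k)%nat.
Proof. induction k; simpl; lia. Qed.
Lemma deg_ppow' P k : (deg P <= 1)%nat -> (deg (ppow P k) <= k)%nat.
Proof. intros H. induction k; simpl; lia. Qed.
Lemma deg_pmonom al : forall off, (deg (pmonom off al) <= fold_right Nat.add 0%nat al)%nat.
Proof. induction al; intros off; simpl; auto. pose proof (deg_ppow' (PV off) a ltac:(simpl; lia)). specialize (IHal (S off)). lia. Qed.
Lemma ws_pmonom n al : forall off, (off + length al <= n)%nat -> ws n (pmonom off al).
Proof.
  induction al; intros off H; simpl; auto. split.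
  - assert (ws n (PV off)) by (simpl; simpl in H; lia). clear -H0. induction a; simpl; auto.
  - apply IHal. simpl in H. lia.
Qed.

Lemma mi_props n : forall p a, In a (multi_indices n p) -> length a = n /\ (fold_right Nat.add 0%nat a <= p)%nat.
Proof.
  induction n; intros p a H.
  - simpl in H. destruct H as [<-|[]]. simpl; lia.
  - change (In a (flat_map (fun k => map (cons k) (multi_indices n (p - k))) (seq 0 (S p)))) in H.
    apply in_flat_map in H as [k [Hk H]]. apply in_map_iff in H as [a' [<- Ha']].
    apply in_seq in Hk. destruct (IHn _ _ Ha') as [H1 H2]. simpl. lia.
Qed.

Definition pfromL (c : list nat -> R) (l : list (list nat)) : pe :=
  fold_right (fun a acc => PA (PM (PC (c a)) (pmonom 0 a)) acc) (PC 0) l.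

Lemma inPp_pe n p v : in_Pp n p v -> exists e, ws n e /\ (deg e <= p)%nat /\ forall x, v x = ev e x.
Proof.
  intros [c Hc]. exists (pfromL c (multi_indices n p)).
  assert (HP := mi_props n p).
  generalize dependent (multi_indices n p). intros l Hc HP. split; [|split].
  - clear Hc. induction l; simpl; auto. split; [split; [exact I|]|].
    + apply ws_pmonom. destruct (HP a (or_introl eq_refl)). simpl; lia.
    + apply IHl. intros; apply HP; simpl; auto.
  - clear Hc. induction l; simpl; [lia|].
    pose proof (deg_pmonom a 0). destruct (HP a (or_introl eq_refl)).
    assert (deg (pfromL c l) <= p)%nat by (apply IHl; intros; apply HP; simpl; auto). lia.
  - intros x. rewrite Hc. clear. induction l; simpl; auto. rewrite IHl, ev_pmonom. auto.
Qed.

Lemma adm_nonneg p C : inv_ineq_const p 1 C -> 0 <= C.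
Proof.
  intros H. assert (Hv : in_Pp 1 p (ev (PC 1))) by (apply pe_inPp1; simpl; auto; lia).
  specialize (H _ Hv 0%nat ltac:(lia)).
  assert (E : L2norm 1 (ev (PC 1)) = 1).
  { unfold L2norm. simpl. rewrite RInt_const. rsimpl. replace ((1 - 0) * (1 * (1 * 1))) with 1 by ring. apply sqrt_1. }
  rewrite E in H. pose proof (sqrt_pos (simplex_int 1 1 (fun x => partial 0 (ev (PC 1)) x ^ 2))).
  unfold L2norm in H. lra.
Qed.
Lemma simplex_int_1 f : simplex_int 1 1 f = RInt (fun t => f (scons t (fun _ => 0))) 0 1.
Proof. reflexivity. Qed.

Lemma line_upd y m c u : upd y m (c * u) = line (upd y m 0) (fun k => c * dl m k) u.
Proof.
  apply functional_extensionality; intro k. unfold upd, line, dl. destruct (Nat.eqb k m); ring.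
Qed.
Lemma line_upd1 y m u : upd y m u = line (upd y m 0) (dl m) u.
Proof.
  apply functional_extensionality; intro k. unfold upd, line, dl. destruct (Nat.eqb k m); ring.
Qed.

Lemma exR_upd P y m lo hi : ex_RInt (fun t => ev P (upd y m t)) lo hi.
Proof.
  eapply ex_RInt_ext; [|apply (ex_RInt_line P (upd y m 0) (dl m))].
  intros x _; rewrite (line_upd1 y m x); reflexivity.
Qed.

Lemma exR_upd_sc P y m c lo hi : ex_RInt (fun t => ev P (upd y m (c * t))) lo hi.
Proof.
  eapply ex_RInt_ext; [|apply (ex_RInt_line P (upd y m 0) (fun k => c * dl m k))].
  intros x _; rewrite (line_upd y m c x); reflexivity.
Qed.

Lemma deriv_sc e y m c u :
  Derive (fun u => ev e (upd y m (c * u))) u = c * ev (D (dl m) e) (upd y m (c * u)).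
Proof.
  replace (fun u => ev e (upd y m (c * u))) with (fun u => ev e (line (upd y m 0) (fun k => c * dl m k) u)).
  2:{ apply functional_extensionality; intro t. rewrite (line_upd y m c t); auto. }
  rewrite (is_derive_unique _ _ _ (is_derive_line e _ _ u)). rewrite <- (line_upd y m c u).
  rewrite (D_ext _ (fun k => c * dl m k + 0 * dl m k)) by (intros; ring).
  rewrite D_lin. ring.
Qed.

Lemma inPp_line p m e y c : ws (S m) e -> (deg e <= p)%nat ->
  in_Pp 1 p (fun z => ev e (upd y m (c * z 0%nat))).
Proof.
  intros Hw Hd.
  set (sg := fun k => if Nat.eqb k m then PM (PC c) (PV 0) else PC (y k)).
  assert (H : in_Pp 1 p (ev (sub sg e))).
  { apply pe_inPp1.
    - apply (ws_sub (S m) 1 sg e Hw). intros k _. unfold sg. destruct (Nat.eqb k m); simpl; auto.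
    - eapply Nat.le_trans; [apply deg_sub|exact Hd]. intros k. unfold sg. destruct (Nat.eqb k m); simpl; lia. }
  destruct H as [cc Hc]. exists cc. intros z. rewrite <- Hc. rewrite ev_sub. f_equal.
  apply functional_extensionality; intro k. unfold sg, upd. destruct (Nat.eqb k m); simpl; auto.
Qed.
Ltac Rring := match goal with |- ?a = ?b => change (@eq R a b) end; ring.
Lemma RInt_scalR (f : R -> R) a b l : ex_RInt f a b -> RInt (fun x => l * f x) a b = l * RInt f a b.
Proof. intros H. exact (RInt_scal f a b l H). Qed.
Lemma RInt_comp_linR (f : R -> R) u v a b : ex_RInt f (u * a + v) (u * b + v) ->
  RInt (fun y => u * f (u * y + v)) a b = RInt f (u * a + v) (u * b + v).
Proof. intros H. exact (RInt_comp_lin f u v a b H). Qed.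

Lemma partial0_line e y m c z :
  partial 0 (fun z => ev e (upd y m (c * z 0%nat))) z = c * ev (D (dl m) e) (upd y m (c * z 0%nat)).
Proof.
  unfold partial. change (Derive (fun t => ev e (upd y m (c * t))) (z 0%nat) = c * ev (D (dl m) e) (upd y m (c * z 0%nat))).
  apply deriv_sc.
Qed.

Lemma exR_ext_upd P y m lo hi (f : R -> R) : (forall t, f t = ev P (upd y m t)) -> ex_RInt f lo hi.
Proof. intros H. eapply ex_RInt_ext; [|apply (exR_upd P y m lo hi)]. intros; rewrite H; auto. Qed.

Lemma line_ineq p C m e y : inv_ineq_const p 1 C -> ws (S m) e -> (deg e <= p)%nat -> 0 <= 1 - sumf m y ->
  RInt (fun t => ev (PM (PM (Lam m) (Lam m)) (PM (D (dl m) e) (D (dl m) e))) (upd y m t)) 0 (1 - sumf m y)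
  <= RInt (fun t => ev (PM (PC (C * C)) (PM e e)) (upd y m t)) 0 (1 - sumf m y).
Proof.
  intros HC Hw Hd HL. set (La := 1 - sumf m y) in *.
  assert (E0 : forall t, ev (Lam m) (upd y m t) = La).
  { intros t. rewrite ev_Lam. change (upd y m t) with (updA y m t). rewrite sumf_upd_out by lia. auto. }
  destruct (Req_dec La 0) as [H0|Hne].
  { rewrite H0, !RInt_point. unfold zero; simpl; lra. }
  assert (Hpos : 0 < La) by lra.
  set (DP := D (dl m) e).
  assert (HA := HC _ (inPp_line p m e y La Hw Hd) 0%nat ltac:(lia)).
  unfold L2norm in HA. rewrite !simplex_int_1 in HA.
  assert (exG : forall lo hi, ex_RInt (fun t => La * (ev DP (upd y m t) * ev DP (upd y m t))) lo hi).
  { intros lo hi. apply (exR_ext_upd (PM (PC La) (PM DP DP)) y m). intros; reflexivity. }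
  assert (exV : forall lo hi, ex_RInt (fun t => ev e (upd y m t) * ev e (upd y m t)) lo hi).
  { intros lo hi. apply (exR_ext_upd (PM e e) y m). intros; reflexivity. }
  assert (EA : RInt (fun t => partial 0 (fun z => ev e (upd y m (La * z 0%nat))) (scons t (fun _ => 0)) ^ 2) 0 1
             = RInt (fun t => La * (ev DP (upd y m t) * ev DP (upd y m t))) 0 La).
  { transitivity (RInt (fun t => La * ((fun t => La * (ev DP (upd y m t) * ev DP (upd y m t))) (La * t + 0))) 0 1).
    - apply RInt_ext. intros t _. rewrite (partial0_line e y m La). simpl. rewrite Rplus_0_r. fold DP. ring.
    - etransitivity.
      { apply (RInt_comp_linR (fun t => La * (ev DP (upd y m t) * ev DP (upd y m t))) La 0 0 1). apply exG. }
      f_equal; ring. }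
  assert (EB : RInt (fun t => ev e (upd y m t) * ev e (upd y m t)) 0 La
             = La * RInt (fun t => (ev e (upd y m (La * scons t (fun _ => 0) 0%nat))) ^ 2) 0 1).
  { rewrite <- RInt_scalR.
    - transitivity (RInt (fun t => ev e (upd y m t) * ev e (upd y m t)) (La * 0 + 0) (La * 1 + 0)).
      { f_equal; ring. }
      etransitivity.
      { symmetry. apply (RInt_comp_linR (fun t => ev e (upd y m t) * ev e (upd y m t)) La 0 0 1). apply exV. }
      apply RInt_ext. intros t _. simpl. rewrite Rplus_0_r. ring.
    - eapply ex_RInt_ext; [|apply (exR_upd_sc (PM e e) y m La 0 1)].
      intros t _. simpl. ring. }
  set (A := RInt (fun t => La * (ev DP (upd y m t) * ev DP (upd y m t))) 0 La) in *.
  set (B := RInt (fun t => (ev e (upd y m (La * scons t (fun _ => 0) 0%nat))) ^ 2) 0 1) in *.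
  rewrite EA in HA. fold B in HA.
  assert (A0 : 0 <= A).
  { apply RInt_ge_0; [lra|apply exG|]. intros t _. pose proof (Rle_0_sqr (ev DP (upd y m t))). unfold Rsqr in *. nra. }
  assert (B0 : 0 <= B).
  { assert (0 <= RInt (fun t => ev e (upd y m t) * ev e (upd y m t)) 0 La).
    { apply RInt_ge_0; [lra|apply exV|]. intros t _. apply Rle_0_sqr. }
    rewrite EB in H. nra. }
  assert (LHS : RInt (fun t => ev (PM (PM (Lam m) (Lam m)) (PM DP DP)) (upd y m t)) 0 La = La * A).
  { unfold A. rewrite <- RInt_scalR; [|apply exG]. apply RInt_ext. intros t _.
    change (ev (PM (PM (Lam m) (Lam m)) (PM DP DP)) (upd y m t)) with
      (ev (Lam m) (upd y m t) * ev (Lam m) (upd y m t) * (ev DP (upd y m t) * ev DP (upd y m t))).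
    rewrite E0. Rring. }
  assert (RHS : RInt (fun t => ev (PM (PC (C * C)) (PM e e)) (upd y m t)) 0 La = C * C * (La * B)).
  { rewrite <- EB. rewrite <- RInt_scalR; [|apply exV]. apply RInt_ext. intros t _. simpl. Rring. }
  fold DP. rewrite LHS, RHS.
  pose proof (sqrt_pos A). pose proof (sqrt_pos B). pose proof (sqrt_sqrt A A0). pose proof (sqrt_sqrt B B0).
  assert (C0 : 0 <= C) by (eapply adm_nonneg; eauto).
  assert (A <= C * C * B) by nra.
  nra.
Qed.


Lemma ws_mono n n' e : ws n e -> (n <= n')%nat -> ws n' e.
Proof. induction e; simpl; intuition lia. Qed.

Lemma BC_peel P m : ws (S m) P -> BC m (fun y => RInt (fun t => ev P (upd y m t)) 0 (1 - sumf m y)).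
Proof.
  intros H. destruct (pe_BC (S m) P H) as [L [_ E]]. exists (map (peelI m) L). intros y.
  rewrite <- peel_combo. apply RInt_ext. intros; apply E.
Qed.

Lemma ws_D n dir e : ws n e -> ws n (D dir e).
Proof. induction e; simpl; intuition. Qed.

Definition sq (P : pe) : pe := PM P P.

Lemma ws_Lam n n' : (n <= n')%nat -> ws n' (Lam n).
Proof. intros H. simpl. split; [exact I|]. split; [exact I|]. eapply ws_mono; [apply ws_psum|lia]. Qed.

Lemma fiber p C m e : inv_ineq_const p 1 C -> ws (S m) e -> (deg e <= p)%nat ->
  simplex_int (S m) 1 (ev (PM (sq (Lam m)) (sq (D (dl m) e))))
  <= simplex_int (S m) 1 (ev (PM (PC (C * C)) (sq e))).
Proof.
  intros HC Hw Hd. rewrite !peel. apply mono_BC.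
  - apply BC_peel. assert (ws (S m) (Lam m)) by (apply ws_Lam; lia).
    assert (ws (S m) (D (dl m) e)) by (apply ws_D; auto).
    exact (conj (conj H H) (conj H0 H0)).
  - apply BC_peel. exact (conj I (conj Hw Hw)).
  - intros y [_ Hy]. apply (line_ineq p); auto. lra.
Qed.

Lemma dl_sw k m j : dl m (sw k m j) = dl k j.
Proof.
  unfold dl, sw. destruct (Nat.eqb_spec j k); subst.
  - rewrite Nat.eqb_refl. reflexivity.
  - destruct (Nat.eqb_spec j m); subst.
    + destruct (Nat.eqb_spec k m); subst; [lia|]. reflexivity.
    + destruct (Nat.eqb_spec j m); [lia|]. reflexivity.
Qed.

Definition TA n k e : pe := PM (sq (PA (Lam n) (PV k))) (sq (D (dl k) e)).


Lemma ws_TA n k e : (k < n)%nat -> ws n e -> ws n (TA n k e).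
Proof.
  intros Hk Hw. pose proof (ws_Lam n n (le_n n)). pose proof (ws_D n (dl k) e Hw).
  assert (ws n (PA (Lam n) (PV k))) by (split; [exact H|exact Hk]).
  exact (conj (conj H1 H1) (conj H0 H0)).
Qed.

Lemma sumf_swapx n x k m : (k < n)%nat -> (m < n)%nat -> sumf n (fun j => x (sw k m j)) = sumf n x.
Proof. intros; apply sumf_swap; auto. Qed.

Lemma termA p C m e k : inv_ineq_const p 1 C -> ws (S m) e -> (deg e <= p)%nat -> (k < S m)%nat ->
  simplex_int (S m) 1 (ev (TA (S m) k e)) <= simplex_int (S m) 1 (ev (PM (PC (C * C)) (sq e))).
Proof.
  intros HC Hw Hd Hk.
  assert (Hws : ws (S m) (sub (swS k m) e)) by (apply (ws_sub (S m)); auto; intros; apply ws_swS; auto).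
  assert (Hdg : (deg (sub (swS k m) e) <= p)%nat) by (eapply Nat.le_trans; [apply deg_sub; intros; apply deg_swS|exact Hd]).
  pose proof (fiber p C m (sub (swS k m) e) HC Hws Hdg) as F.
  replace (simplex_int (S m) 1 (ev (PM (PC (C * C)) (sq (sub (swS k m) e)))))
    with (simplex_int (S m) 1 (ev (sub (swS k m) (PM (PC (C * C)) (sq e))))) in F by reflexivity.
  rewrite inv_sw in F; auto; [|simpl; intuition].
  rewrite <- (inv_sw (S m) k m) by (auto; apply ws_TA; auto).
  eapply Rle_trans; [|exact F]. right. apply int_ext. intros x.
  rewrite ev_sub. unfold TA, sq. cbn [ev].
  rewrite D_chain.
  replace (fun k0 => ev (D (dl m) (swS k m k0)) x) with (dl k).
  2:{ apply functional_extensionality; intro j. unfold swS. simpl. rewrite dl_sw. auto. }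
  change (fun k0 => ev (swS k m k0) x) with (fun j => x (sw k m j)).
  rewrite !ev_Lam. rewrite sumf_swapx by (auto; lia).
  change (ev (swS k m k) x) with (x (sw k m k)). replace (sw k m k) with m by (unfold sw; rewrite Nat.eqb_refl; auto).
  rewrite (sumf_last m x). ring.
Qed.

Lemma sumf_dl n i : (i < n)%nat -> sumf n (dl i) = 1.
Proof.
  intros H. rewrite (sumf_extract n (dl i) i H). unfold dl at 1. rewrite Nat.eqb_refl.
  replace (updA (dl i) i 0) with (fun _ : nat => 0). rewrite sumf_zero; ring.
  apply functional_extensionality; intro k. unfold updA, dl. destruct (Nat.eqb k i); auto.
Qed.

Lemma D_Lam dir n x : ev (D dir (Lam n)) x = - sumf n dir.
Proof. unfold Lam. cbn [D ev]. rewrite D_psum. ring. Qed.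

Definition TB i j e : pe := PM (sq (PA (PV i) (PV j))) (sq (PA (D (dl i) e) (PM (PC (-1)) (D (dl j) e)))).

Lemma ws_TB n i j e : (i < n)%nat -> (j < n)%nat -> ws n e -> ws n (TB i j e).
Proof.
  intros Hi Hj Hw. pose proof (ws_D n (dl i) e Hw). pose proof (ws_D n (dl j) e Hw).
  assert (A1 : ws n (PA (PV i) (PV j))) by (split; auto).
  assert (A2 : ws n (PA (D (dl i) e) (PM (PC (-1)) (D (dl j) e)))) by (split; auto; split; auto; exact I).
  exact (conj (conj A1 A1) (conj A2 A2)).
Qed.

Lemma termB p C m e i j : inv_ineq_const p 1 C -> ws (S m) e -> (deg e <= p)%nat ->
  (i < S m)%nat -> (j < S m)%nat -> i <> j ->
  simplex_int (S m) 1 (ev (TB i j e)) <= simplex_int (S m) 1 (ev (PM (PC (C * C)) (sq e))).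
Proof.
  intros HC Hw Hd Hi Hj Hij.
  assert (Hws1 : ws (S m) (sub (vS (S m) j) e)) by (apply (ws_sub (S m)); auto; intros; apply ws_vS; auto).
  assert (Hws : ws (S m) (sub (swS i m) (sub (vS (S m) j) e))) by (apply (ws_sub (S m)); auto; intros; apply ws_swS; auto).
  assert (Hdg : (deg (sub (swS i m) (sub (vS (S m) j) e)) <= p)%nat).
  { eapply Nat.le_trans; [apply deg_sub; intros; apply deg_swS|].
    eapply Nat.le_trans; [apply deg_sub; intros; apply deg_vS|exact Hd]. }
  pose proof (fiber p C m _ HC Hws Hdg) as F.
  replace (simplex_int (S m) 1 (ev (PM (PC (C * C)) (sq (sub (swS i m) (sub (vS (S m) j) e))))))
    with (simplex_int (S m) 1 (ev (sub (swS i m) (sub (vS (S m) j) (PM (PC (C * C)) (sq e)))))) in F by reflexivity.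
  rewrite inv_sw in F; auto; [|exact (conj I (conj Hws1 Hws1))].
  rewrite inv_v in F; auto; [|exact (conj I (conj Hw Hw))].
  rewrite <- (inv_v (S m) j) by (auto; apply ws_TB; auto).
  assert (W2 : ws (S m) (sub (vS (S m) j) (TB i j e))).
  { apply (ws_sub (S m)); [apply ws_TB; auto|intros; apply ws_vS; auto]. }
  rewrite <- (inv_sw (S m) i m _ Hi ltac:(lia) W2).
  eapply Rle_trans; [|exact F]. right. apply int_ext. intros x.
  rewrite !ev_sub. unfold TB, sq. cbn [ev].
  rewrite D_chain.
  replace (fun k0 => ev (D (dl m) (swS i m k0)) x) with (dl i).
  2:{ apply functional_extensionality; intro k. unfold swS. cbn [ev D]. rewrite dl_sw. auto. }
  rewrite D_chain.
  set (z := fun k => ev (swS i m k) x).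
  rewrite (D_ext (fun k0 => ev (D (dl i) (vS (S m) j k0)) z) (fun k => 1 * dl i k + (-1) * dl j k)).
  2:{ intros k. unfold vS. destruct (Nat.eqb_spec k j).
      - subst. rewrite D_Lam, sumf_dl by auto. unfold dl. rewrite Nat.eqb_refl.
        destruct (Nat.eqb_spec j i); [lia|]. ring.
      - cbn [D ev]. unfold dl. destruct (Nat.eqb_spec k j); [lia|]. ring. }
  rewrite D_lin.
  assert (Bi : ev (vS (S m) j i) z = x m).
  { unfold vS. destruct (Nat.eqb_spec i j); [lia|]. unfold z, swS. cbn [ev]. unfold sw. rewrite Nat.eqb_refl. auto. }
  assert (Bj : ev (vS (S m) j j) z = 1 - sumf (S m) x).
  { unfold vS. rewrite Nat.eqb_refl. rewrite ev_Lam. unfold z, swS. cbn [ev]. rewrite sumf_swapx; auto; lia. }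
  rewrite Bi, Bj, ev_Lam, (sumf_last m x). ring.
Qed.


Lemma CS n : forall a b, sumf n (fun j => a j * b j) * sumf n (fun j => a j * b j)
  <= sumf n (fun j => a j * a j) * sumf n (fun j => b j * b j).
Proof.
  induction n; intros a b; simpl; [lra|].
  assert (IH := IHn (fun k => a (S k)) (fun k => b (S k))). cbv beta in IH.
  set (Sab := sumf n (fun k => a (S k) * b (S k))) in *.
  set (A := sumf n (fun k => a (S k) * a (S k))) in *.
  set (B := sumf n (fun k => b (S k) * b (S k))) in *.
  assert (A0 : 0 <= A) by (apply sumf_nonneg; intros; apply Rle_0_sqr).
  assert (B0 : 0 <= B) by (apply sumf_nonneg; intros; apply Rle_0_sqr).
  set (a0 := a 0%nat). set (b0 := b 0%nat).
  assert (K : 2 * a0 * b0 * Sab <= a0 * a0 * B + b0 * b0 * A).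
  { destruct (Req_dec A 0) as [HA|HA].
    - rewrite HA in IH. assert (Sab = 0) by nra. subst. rewrite H, HA. nra.
    - assert (HA' : 0 < A) by lra.
      assert (E : A * (a0 * a0 * B + b0 * b0 * A - 2 * a0 * b0 * Sab) =
                  (b0 * A - a0 * Sab) * (b0 * A - a0 * Sab) + a0 * a0 * (A * B - Sab * Sab)) by ring.
      assert (0 <= (b0 * A - a0 * Sab) * (b0 * A - a0 * Sab) + a0 * a0 * (A * B - Sab * Sab)).
      { apply Rplus_le_le_0_compat; [apply Rle_0_sqr|]. apply Rmult_le_pos; [apply Rle_0_sqr|lra]. }
      rewrite <- E in H. nra. }
  nra.
Qed.

Lemma term_lb a b c u w : 0 <= a -> 0 <= b -> 0 <= c ->
  b * b * ((u + w) * (u + w)) / 2 <= (a + b) * (a + b) * (u * u) + (c + b) * (c + b) * (w * w).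
Proof.
  intros Ha Hb Hc.
  assert (H1 : b * b <= (a + b) * (a + b)) by nra.
  assert (H2 : b * b <= (c + b) * (c + b)) by nra.
  assert (H3 : b * b * (u * u) <= (a + b) * (a + b) * (u * u)) by (apply Rmult_le_compat_r; [apply Rle_0_sqr|lra]).
  assert (H4 : b * b * (w * w) <= (c + b) * (c + b) * (w * w)) by (apply Rmult_le_compat_r; [apply Rle_0_sqr|lra]).
  assert (H5 : (u + w) * (u + w) / 2 <= u * u + w * w) by (pose proof (Rle_0_sqr (u - w)); unfold Rsqr in *; lra).
  assert (H6 : b * b * ((u + w) * (u + w) / 2) <= b * b * (u * u + w * w)) by (apply Rmult_le_compat_l; [apply Rle_0_sqr|lra]).
  lra.
Qed.

Lemma sumf_upd1 n i : (i < n)%nat -> sumf n (fun j => if Nat.eqb j i then 0 else 1) = INR n - 1.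
Proof.
  intros H. pose proof (sumf_extract n (fun _ => 1) i H) as E. rewrite sumf_const in E.
  change (updA (fun _ : nat => 1) i 0) with (fun j => if Nat.eqb j i then 0 else 1) in E. lra.
Qed.

Lemma pt_ineq n i (x g : nat -> R) : (i < n)%nat -> (forall k, (k < n)%nat -> 0 <= x k) -> sumf n x <= 1 ->
  g i * g i <= (2 * INR n - 1) * ((1 - sumf n x + x i) * (1 - sumf n x + x i) * (g i * g i) +
    sumf n (fun j => if Nat.eqb j i then 0 else
      (x i + x j) * (x i + x j) * ((g i + -1 * g j) * (g i + -1 * g j)) +
      (1 - sumf n x + x j) * (1 - sumf n x + x j) * (g j * g j))).
Proof.
  intros Hi Hx Hs.
  set (L0 := 1 - sumf n x).
  set (G := g i * g i).
  set (Q := sumf n (fun j => if Nat.eqb j i then 0 else x j * x j)).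
  set (r := sumf n (fun j => if Nat.eqb j i then 0 else x j)).
  set (Tsum := sumf n _).
  assert (HG : 0 <= G) by apply Rle_0_sqr.
  assert (HQ : 0 <= Q) by (apply sumf_nonneg; intros k _; destruct (Nat.eqb k i); [lra|apply Rle_0_sqr]).
  assert (HT : G / 2 * Q <= Tsum).
  { unfold Tsum, Q. rewrite <- sumf_scal. apply sumf_le. intros j Hj.
    destruct (Nat.eqb_spec j i); [lra|].
    replace (G / 2 * (x j * x j)) with (x j * x j * ((g i + -1 * g j + g j) * (g i + -1 * g j + g j)) / 2)
      by (unfold G; field).
    apply term_lb; [apply Hx; auto|apply Hx; auto|unfold L0; lra]. }
  assert (Hr : r = sumf n x - x i).
  { unfold r. rewrite (sumf_extract n x i Hi). unfold updA. ring. }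
  assert (HCS : r * r <= (INR n - 1) * Q).
  { pose proof (CS n (fun j => if Nat.eqb j i then 0 else 1) (fun j => if Nat.eqb j i then 0 else x j)) as C. cbv beta in C.
    replace (sumf n (fun j => (if Nat.eqb j i then 0 else 1) * (if Nat.eqb j i then 0 else x j))) with r in C
      by (apply bigf_ext; intros k _; destruct (Nat.eqb k i); ring).
    replace (sumf n (fun j => (if Nat.eqb j i then 0 else 1) * (if Nat.eqb j i then 0 else 1)))
      with (INR n - 1) in C.
    2:{ rewrite <- (sumf_upd1 n i Hi). apply bigf_ext; intros k _; destruct (Nat.eqb k i); ring. }
    replace (sumf n (fun j => (if Nat.eqb j i then 0 else x j) * (if Nat.eqb j i then 0 else x j))) with Q in C
      by (apply bigf_ext; intros k _; destruct (Nat.eqb k i); ring).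
    exact C. }
  set (N := INR n - 1) in *.
  assert (HN : 0 <= N) by (unfold N; assert (1 <= INR n) by (apply (le_INR 1); lia); lra).
  set (s0 := L0 + x i).
  assert (Hsr : s0 + r = 1) by (unfold s0, L0; rewrite Hr; ring).
  assert (Key : 1 <= (2 * N + 1) * (s0 * s0 + Q / 2)).
  { destruct (Req_dec N 0) as [H0|H0].
    - rewrite H0 in *. assert (r = 0) by nra. assert (s0 = 1) by lra. subst. rewrite H1. nra.
    - assert (0 < N) by lra.
      assert (E : 2 * N * ((2 * N + 1) * (s0 * s0 + Q / 2) - (s0 + r) * (s0 + r)) =
                  (2 * N * s0 - r) * (2 * N * s0 - r) + (2 * N + 1) * (N * Q - r * r)) by (field).
      assert (0 <= (2 * N * s0 - r) * (2 * N * s0 - r) + (2 * N + 1) * (N * Q - r * r)).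
      { apply Rplus_le_le_0_compat; [apply Rle_0_sqr|]. apply Rmult_le_pos; lra. }
      rewrite <- E, Hsr in H1. nra. }
  replace (2 * INR n - 1) with (2 * N + 1) by (unfold N; ring).
  fold s0.
  assert (G <= (2 * N + 1) * (s0 * s0 + Q / 2) * G) by nra.
  assert ((2 * N + 1) * (s0 * s0 * G + G / 2 * Q) <= (2 * N + 1) * (s0 * s0 * G + Tsum)).
  { apply Rmult_le_compat_l; lra. }
  nra.
Qed.


Fixpoint pbig (N : nat) (F : nat -> pe) : pe :=
  match N with O => PC 0 | S N' => PA (F 0%nat) (pbig N' (fun k => F (S k))) end.

Lemma ev_pbig N : forall F x, ev (pbig N F) x = sumf N (fun j => ev (F j) x).
Proof. induction N; intros F x; simpl; auto. rewrite IHN. auto. Qed.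

Lemma ws_pbig n N : forall F, (forall j, (j < N)%nat -> ws n (F j)) -> ws n (pbig N F).
Proof.
  induction N; intros F H; simpl; auto. split; [apply H; lia|]. apply IHN. intros; apply H; lia.
Qed.

Lemma int_zero n : simplex_int n 1 (ev (PC 0)) = 0.
Proof.
  rewrite (int_ext n 1 (ev (PC 0)) (fun x => 0 * ev (PC 0) x)) by (intros; simpl; ring).
  rewrite int_scal; [ring|]. apply BC_ev. exact I.
Qed.

Lemma int_PA n a b : ws n a -> ws n b ->
  simplex_int n 1 (ev (PA a b)) = simplex_int n 1 (ev a) + simplex_int n 1 (ev b).
Proof.
  intros Ha Hb. rewrite (int_ext n 1 (ev (PA a b)) (fun x => ev a x + ev b x)) by reflexivity.
  apply int_add; apply BC_ev; auto.
Qed.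

Lemma int_pbig n N : forall F, (forall j, (j < N)%nat -> ws n (F j)) ->
  simplex_int n 1 (ev (pbig N F)) = sumf N (fun j => simplex_int n 1 (ev (F j))).
Proof.
  induction N; intros F H; cbn [pbig bigf].
  - apply int_zero.
  - rewrite int_PA; [|apply H; lia|apply ws_pbig; intros; apply H; lia].
    rewrite IHN; auto. intros; apply H; lia.
Qed.

Lemma ev_TA n k e x : ev (TA n k e) x =
  (1 - sumf n x + x k) * (1 - sumf n x + x k) * (ev (D (dl k) e) x * ev (D (dl k) e) x).
Proof. unfold TA, sq. cbn [ev]. rewrite ev_Lam. ring. Qed.

Lemma ev_TB i j e x : ev (TB i j e) x =
  (x i + x j) * (x i + x j) * ((ev (D (dl i) e) x + -1 * ev (D (dl j) e) x) * (ev (D (dl i) e) x + -1 * ev (D (dl j) e) x)).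
Proof. unfold TB, sq. cbn [ev]. ring. Qed.

Definition Fj n i e j : pe := if Nat.eqb j i then PC 0 else PA (TB i j e) (TA n j e).

Lemma int_chain p C m e i : inv_ineq_const p 1 C -> ws (S m) e -> (deg e <= p)%nat -> (i < S m)%nat ->
  simplex_int (S m) 1 (fun x => ev (D (dl i) e) x ^ 2)
  <= (2 * INR (S m) - 1) * (2 * INR (S m) - 1) * (C * C) * simplex_int (S m) 1 (fun x => ev e x ^ 2).
Proof.
  intros HC Hw Hd Hi. set (n := S m) in *.
  set (c := 2 * INR n - 1).
  assert (Hc : 1 <= c) by (unfold c, n; rewrite S_INR; pose proof (pos_INR m); lra).
  assert (WFj : forall j, (j < n)%nat -> ws n (Fj n i e j)).
  { intros j Hj. unfold Fj. destruct (Nat.eqb_spec j i); [exact I|].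
    split; [apply ws_TB; auto|apply ws_TA; auto]. }
  set (RH := PM (PC c) (PA (TA n i e) (pbig n (Fj n i e)))).
  assert (WRH : ws n RH).
  { split; [exact I|]. split; [apply ws_TA; auto|apply ws_pbig; auto]. }
  assert (S1 : simplex_int n 1 (fun x => ev (D (dl i) e) x ^ 2) <= simplex_int n 1 (ev RH)).
  { apply mono_BC.
    - apply (BC_ext n _ (ev (sq (D (dl i) e)))). intros x; unfold sq; cbn [ev]; ring.
      apply BC_ev. pose proof (ws_D n (dl i) e Hw). split; auto.
    - apply BC_ev; auto.
    - intros x [Hx Hs]. eapply Rle_trans.
      + replace (ev (D (dl i) e) x ^ 2) with (ev (D (dl i) e) x * ev (D (dl i) e) x) by ring.
        apply (pt_ineq n i x (fun k => ev (D (dl k) e) x) Hi Hx Hs).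
      + right. unfold RH. cbn [ev]. rewrite ev_pbig, ev_TA. fold c. f_equal. f_equal.
        apply bigf_ext. intros j Hj. unfold Fj. destruct (Nat.eqb j i); [reflexivity|].
        cbn [ev]. rewrite ev_TB, ev_TA. ring. }
  set (W := simplex_int n 1 (fun x => ev e x ^ 2)).
  set (V := simplex_int n 1 (ev (PM (PC (C * C)) (sq e)))).
  assert (HV : V = C * C * W).
  { unfold V, W. rewrite (int_ext n 1 _ (fun x => C * C * (ev e x ^ 2))) by (intros; unfold sq; cbn [ev]; ring).
    apply int_scal. apply (BC_ext n _ (ev (sq e))); [intros; unfold sq; cbn [ev]; ring|].
    apply BC_ev. split; auto. }
  assert (S2 : simplex_int n 1 (ev RH) =
    c * (simplex_int n 1 (ev (TA n i e)) + sumf n (fun j => simplex_int n 1 (ev (Fj n i e j))))).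
  { unfold RH. rewrite (int_ext n 1 _ (fun x => c * ev (PA (TA n i e) (pbig n (Fj n i e))) x)) by reflexivity.
    rewrite int_scal; [|apply BC_ev; split; [apply ws_TA; auto|apply ws_pbig; auto]].
    rewrite int_PA; [|apply ws_TA; auto|apply ws_pbig; auto]. rewrite int_pbig; auto. }
  assert (S3 : simplex_int n 1 (ev (TA n i e)) <= V) by (apply (termA p); auto).
  assert (S4 : sumf n (fun j => simplex_int n 1 (ev (Fj n i e j))) <= (INR n - 1) * (2 * V)).
  { rewrite <- (sumf_upd1 n i Hi), Rmult_comm, <- sumf_scal. apply sumf_le. intros j Hj.
    unfold Fj. destruct (Nat.eqb_spec j i).
    - rewrite int_zero. lra.
    - rewrite int_PA; [|apply ws_TB; auto|apply ws_TA; auto].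
      pose proof (termB p C m e i j HC Hw Hd Hi Hj (not_eq_sym n0)). pose proof (termA p C m e j HC Hw Hd Hj). fold n V in H, H0.
      lra. }
  rewrite S2 in S1. rewrite HV in *.
  assert (c * (simplex_int n 1 (ev (TA n i e)) + sumf n (fun j => simplex_int n 1 (ev (Fj n i e j))))
          <= c * (C * C * W + (INR n - 1) * (2 * (C * C * W)))) by (apply Rmult_le_compat_l; lra).
  replace (c * (C * C * W + (INR n - 1) * (2 * (C * C * W)))) with (c * c * (C * C) * W) in H
    by (unfold c; ring).
  lra.
Qed.


Lemma main_bound p C n i v : (1 <= n)%nat -> inv_ineq_const p 1 C -> in_Pp n p v -> (i < n)%nat ->
  L2norm n (partial i v) <= (2 * INR n - 1) * C * L2norm n v.
Proof.
  intros Hn HC Hv Hi. destruct n as [|m]; [lia|].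
  destruct (inPp_pe _ _ _ Hv) as [e [Hw [Hd He]]].
  replace v with (ev e) by (apply functional_extensionality; intros; rewrite He; auto).
  replace (partial i (ev e)) with (ev (D (dl i) e)) by (apply functional_extensionality; intros; rewrite partial_ev; auto).
  unfold L2norm.
  pose proof (int_chain p C m e i HC Hw Hd Hi) as H.
  assert (C0 : 0 <= C) by (eapply adm_nonneg; eauto).
  set (c := 2 * INR (S m) - 1) in *.
  assert (Hc : 1 <= c) by (unfold c; rewrite S_INR; pose proof (pos_INR m); lra).
  set (W := simplex_int (S m) 1 (fun x => ev e x ^ 2)) in *.
  eapply Rle_trans; [apply sqrt_le_1_alt; exact H|].
  replace (c * c * (C * C) * W) with ((c * C) * (c * C) * W) by ring.
  rewrite sqrt_mult_alt by (apply Rle_0_sqr). rewrite sqrt_square by nra. lra.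
Qed.

Lemma pow8_aux k : (2 * INR k + 3) * (2 * INR k + 3) <= 9 * 8 ^ k.
Proof.
  induction k.
  - simpl. lra.
  - rewrite S_INR. simpl (8 ^ S k). pose proof (pos_INR k). nra.
Qed.

Lemma const_bound d : (1 <= d)%nat -> 2 * INR d - 1 <= sqrt 5 / 4 * (2 * sqrt 2) ^ d.
Proof.
  intros Hd.
  set (K := sqrt 5 / 4 * (2 * sqrt 2) ^ d).
  assert (K0 : 0 <= K).
  { unfold K. apply Rmult_le_pos; [pose proof (sqrt_pos 5); lra|]. apply pow_le. pose proof (sqrt_pos 2); lra. }
  assert (KK : K * K = 5 / 16 * 8 ^ d).
  { unfold K. replace (sqrt 5 / 4 * (2 * sqrt 2) ^ d * (sqrt 5 / 4 * (2 * sqrt 2) ^ d))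
      with (sqrt 5 * sqrt 5 / 16 * ((2 * sqrt 2) * (2 * sqrt 2)) ^ d)
      by (rewrite Rpow_mult_distr; field).
    rewrite sqrt_sqrt by lra.
    replace (2 * sqrt 2 * (2 * sqrt 2)) with (4 * (sqrt 2 * sqrt 2)) by ring.
    rewrite sqrt_sqrt by lra. replace (4 * 2) with 8 by ring. ring. }
  assert (A : (2 * INR d - 1) * (2 * INR d - 1) <= 5 / 16 * 8 ^ d).
  { destruct d as [|[|k]]; [lia| simpl; lra|].
    pose proof (pow8_aux k). pose proof (pow_le 8 k ltac:(lra)).
    replace (INR (S (S k))) with (INR k + 2) by (rewrite !S_INR; ring).
    replace (8 ^ S (S k)) with (64 * 8 ^ k) by (simpl; ring). nra. }
  assert (0 <= 2 * INR d - 1) by (assert (1 <= INR d) by (apply (le_INR 1); lia); lra).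
  nra.
Qed.

Lemma adm_scale p d C : (1 <= d)%nat -> inv_ineq_const p 1 C ->
  inv_ineq_const p d (sqrt 5 / 4 * (2 * sqrt 2) ^ d * C).
Proof.
  intros Hd HC v Hv i Hi.
  eapply Rle_trans; [apply (main_bound p C d i v Hd HC Hv Hi)|].
  assert (C0 : 0 <= C) by (eapply adm_nonneg; eauto).
  pose proof (const_bound d Hd).
  assert (0 <= L2norm d v) by apply sqrt_pos.
  apply Rmult_le_compat_r; auto. apply Rmult_le_compat_r; auto.
Qed.

Theorem theoremA2 (d p : nat) (hd : (1 <= d)%nat) :
  Rbar_le (best_const p d)
    (Rbar_mult (Finite (sqrt 5 / 4 * (2 * sqrt 2) ^ d)) (best_const p 1)).
Proof.
  set (K := sqrt 5 / 4 * (2 * sqrt 2) ^ d).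
  assert (KP : 0 < K).
  { unfold K. apply Rmult_lt_0_compat. apply Rmult_lt_0_compat; [apply sqrt_lt_R0; lra|lra].
    apply pow_lt. pose proof (sqrt_lt_R0 2 ltac:(lra)); lra. }
  unfold best_const.
  destruct (Glb_Rbar_correct (inv_ineq_const p 1)) as [lb1 gr1].
  destruct (Glb_Rbar_correct (inv_ineq_const p d)) as [lbd grd].
  assert (Hsc : forall C, inv_ineq_const p 1 C -> Rbar_le (Glb_Rbar (inv_ineq_const p d)) (Finite (K * C))).
  { intros C HC. apply lbd. apply adm_scale; auto. }
  destruct (Glb_Rbar (inv_ineq_const p 1)) as [r| |] eqn:Hg.
  - simpl.
    destruct (Glb_Rbar (inv_ineq_const p d)) as [rd| |] eqn:Hgd.
    + simpl. assert (Rbar_le (Finite (rd / K)) (Finite r)).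
      { apply gr1. intros C HC. specialize (Hsc C HC). simpl in Hsc. simpl.
        apply (Rmult_le_reg_l K); auto. replace (K * (rd / K)) with rd by (field; lra). exact Hsc. }
      simpl in H. apply (Rmult_le_compat_l K) in H; [|lra].
      replace (K * (rd / K)) with rd in H by (field; lra). exact H.
    + exfalso. destruct (classic (exists C, inv_ineq_const p 1 C)) as [[C HC]|HN].
      * specialize (Hsc C HC). simpl in Hsc. auto.
      * assert (Rbar_le p_infty (Finite r)). { apply gr1. intros C HC. exfalso; apply HN; eauto. }
        simpl in H; auto.
    + simpl; auto.
  - simpl. destruct (Rle_dec 0 K) as [h|h]; [|lra].
    destruct (Rle_lt_or_eq_dec 0 K h); [|lra].
    destruct (Glb_Rbar (inv_ineq_const p d)); simpl; auto.
  - exfalso. assert (Rbar_le (Finite 0) m_infty).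
    { apply gr1. intros C HC. simpl. eapply adm_nonneg; eauto. }
    simpl in H; auto.
Qed.
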